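(* Let $\alpha,\delta\in\mathbb{F}\setminus\{\frac12\}$ with $\alpha\neq\delta$, and let $\mathbf{A}$ be the 5-dimensional LV algebra with natural basis $e_1,\dots,e_5$ in which $e_1e_k=\alpha e_1+(1-\alpha)e_k$ for $k\in\{2,3,5\}$, $e_1e_4=\delta e_1+(1-\delta)e_4$, and $e_ie_j=\frac12(e_i+e_j)$ for all $i,j\in\{2,3,4,5\}$. Then $\mathrm{Der}(\mathbf{A})=\{f\in L(\mathbf{A}) : f(e_1)=f(e_4)=0 \text{ and } \mathrm{Im}(f)\subseteq\langle e_2-e_3,\,e_2-e_5\rangle\}$.
   Context: Let $\mathbb{F}$ be a field of characteristic different from $2$. A Lotka–Volterra (LV) algebra of dimension $5$ over $\mathbb{F}$ is a commutative (not necessarily associative) $\mathbb{F}$-algebra $\mathbf{A}$ with a basis $e_1,\dots,e_5$ (the natural basis) such that $e_ie_j=\alpha_{ij}e_i+\alpha_{ji}e_j$ with $\alpha_{ij}\in\mathbb{F}$, $\alpha_{ii}=\frac12$ and $\alpha_{ij}+\alpha_{ji}=1$ for all $i,j$. A derivation is a linear map $D:\mathbf{A}\to\mathbf{A}$ with $D(uv)=D(u)v+uD(v)$ for all $u,v$; $\mathrm{Der}(\mathbf{A})$ is the set of derivations, $L(\mathbf{A})$ the set of linear maps $\mathbf{A}\to\mathbf{A}$, and $\langle x_1,\dots,x_k\rangle$ the linear span. *)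

(* Defs.v *)
From HB Require Import structures.
From mathcomp Require Import all_boot all_order all_algebra.
Set Implicit Arguments. Unset Strict Implicit. Unset Printing Implicit Defensive.
Import GRing.Theory.
Local Open Scope ring_scope.

(* Vectors of the 5-dimensional algebra are row vectors 'rV[F]_5 (coordinates
   in the natural basis).  Basis e_1..e_5 correspond to indices 0..4. *)
Definition ebasis (F : fieldType) (i : 'I_5) : 'rV[F]_5 := delta_mx 0 i.

Definition lvmul (F : fieldType) (a : 'I_5 -> 'I_5 -> F) (u v : 'rV[F]_5) : 'rV[F]_5 :=
  \sum_(i < 5) \sum_(j < 5)
     (u 0 i * v 0 j) *: (a i j *: ebasis F i + a j i *: ebasis F j).

(* The structure table of the algebra of the theorem (indices shifted by one):
   e_1 e_k = alpha e_1 + (1-alpha) e_k for k in {2,3,5}, e_1 e_4 = delta e_1 + (1-delta) e_4,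
   all other products (among e_2..e_5 and squares) have coefficients 1/2. *)
Definition table9 (F : fieldType) (alpha delta : F) (i j : 'I_5) : F :=
  let h := (2%:R : F)^-1 in
  if (i == 0 :> nat) && (j != 0 :> nat) then
    (if j == 3 :> nat then delta else alpha)
  else if (j == 0 :> nat) && (i != 0 :> nat) then
    (if i == 3 :> nat then 1 - delta else 1 - alpha)
  else h.

(* A linear map A -> A is represented by a matrix f acting on row vectors: x |-> x *m f.
   A derivation satisfies D(uv) = D(u) v + u D(v). *)
Definition is_derivation (F : fieldType) (a : 'I_5 -> 'I_5 -> F) (f : 'M[F]_5) : Prop :=
  forall u v : 'rV[F]_5,
    lvmul a u v *m f = lvmul a (u *m f) v + lvmul a u (v *m f).

Definition span9 (F : fieldType) : 'M[F]_(2, 5) :=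
  col_mx (ebasis F 1 - ebasis F 2) (ebasis F 1 - ebasis F 4).

(* Main.v *)
Require Import Defs.
From HB Require Import structures.
From mathcomp Require Import all_boot all_order all_algebra.
From mathcomp Require Import ring.
Import GRing.Theory.
Local Open Scope ring_scope.

Lemma lvmulE (F : fieldType) (a : 'I_5 -> 'I_5 -> F) u v k :
  lvmul a u v 0 k = \sum_(j < 5) a k j * (u 0 k * v 0 j + u 0 j * v 0 k).
Proof.
rewrite /lvmul summxE.
under eq_bigr do rewrite summxE.
under eq_bigr do under eq_bigr do rewrite !mxE /=.
under eq_bigr do under eq_bigr do rewrite mulrDr.
under eq_bigr do rewrite big_split /=.
rewrite big_split /= [X in _ + X]exchange_big /=.
have Z : forall G H : 'I_5 -> 'I_5 -> F, \sum_(i < 5 | i != k) \sum_(j < 5) G i j * (H i j * (k == i)%:R) = 0.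
  by move=> G H; apply: big1 => i ik; apply: big1 => j _; rewrite eq_sym (negbTE ik) mulr0 mulr0.
rewrite (bigD1 k) //= [X in _ + X + _]Z addr0.
rewrite [X in _ + X](bigD1 k) //= [X in _ + (_ + X)]Z addr0.
rewrite -big_split /=; apply: eq_bigr => j _.
by rewrite eqxx !mulr1 mulrDr; congr (_ + _); rewrite mulrC.
Qed.

Lemma ebE (F : fieldType) i j : ebasis F i 0 j = (i == j)%:R.
Proof. by rewrite /ebasis mxE eqxx eq_sym. Qed.
Lemma ebfE (F : fieldType) (f : 'M[F]_5) i j : (ebasis F i *m f) 0 j = f i j.
Proof. by rewrite /ebasis -rowE mxE. Qed.

Notation o n := (@Ordinal 5 n%N isT).
Lemma o0E : ord0 = o 0. Proof. exact: val_inj. Qed.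
Lemma o1E : lift ord0 ord0 = o 1 :> 'I_5. Proof. exact: val_inj. Qed.
Lemma o2E : lift ord0 (lift ord0 ord0) = o 2 :> 'I_5. Proof. exact: val_inj. Qed.
Lemma o3E : lift ord0 (lift ord0 (lift ord0 ord0)) = o 3 :> 'I_5. Proof. exact: val_inj. Qed.
Lemma o4E : lift ord0 (lift ord0 (lift ord0 (lift ord0 ord0))) = o 4 :> 'I_5. Proof. exact: val_inj. Qed.
Lemma colE (F : fieldType) (X Y : 'rV[F]_5) j :
  col_mx X Y ord0 j = X 0 j /\ col_mx X Y (lift ord0 ord0) j = Y 0 j.
Proof.
split.
  have -> : ord0 = lshift 1 (0 : 'I_1) :> 'I_2 by apply: val_inj.
  by rewrite col_mxEu.
have -> : lift ord0 ord0 = rshift 1 (0 : 'I_1) :> 'I_2 by apply: val_inj.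
by rewrite col_mxEd.
Qed.

Lemma spanE (F : fieldType) (D : 'M[F]_(5,2)) i j :
  (D *m span9 F) i j = D i ord0 * ((o 1 == j)%:R - (o 2 == j)%:R)
                     + D i (lift ord0 ord0) * ((o 1 == j)%:R - (o 4 == j)%:R).
Proof.
rewrite !mxE !big_ord_recl big_ord0 /span9 addr0.
case: (@colE F (ebasis F 1 - ebasis F 2) (ebasis F 1 - ebasis F 4) j) => -> ->.
by rewrite !mxE eqxx /= !(eq_sym j).
Qed.

Lemma sumD {F : fieldType} (G : 'I_5 -> F) j : \sum_(l < 5) G l * (j == l)%:R = G j.
Proof.
rewrite (bigD1 j) //= eqxx mulr1 big1 ?addr0 // => l /negbTE.
by rewrite eq_sym => ->; rewrite mulr0.
Qed.

Lemma lvmul_ue {F : fieldType} (a : 'I_5 -> 'I_5 -> F) u j k :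
  lvmul a u (ebasis F j) 0 k = a k j * u 0 k + (k == j)%:R * \sum_(l < 5) a k l * u 0 l.
Proof.
rewrite lvmulE.
under eq_bigr do rewrite !ebE mulrDr.
rewrite big_split /=; congr (_ + _).
  by under eq_bigr do rewrite mulrA; rewrite sumD.
rewrite mulr_sumr; apply: eq_bigr => l _.
by rewrite eq_sym mulrA mulrC.
Qed.

Lemma lvmulC {F : fieldType} (a : 'I_5 -> 'I_5 -> F) u v : lvmul a u v = lvmul a v u.
Proof.
apply/rowP => k; rewrite !lvmulE; apply: eq_bigr => l _; congr (_ * _); rewrite addrC; congr (_ + _); apply: mulrC.
Qed.

Lemma ebf {F : fieldType} (f : 'M[F]_5) i : ebasis F i *m f = row i f.
Proof. by rewrite rowE. Qed.

Lemma lvee {F : fieldType} (a : 'I_5 -> 'I_5 -> F) i j :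
  lvmul a (ebasis F i) (ebasis F j) = a i j *: ebasis F i + a j i *: ebasis F j.
Proof.
apply/rowP => m; rewrite (lvmul_ue a (ebasis F i)) !ebE.
under eq_bigr do rewrite ebE.
rewrite sumD !mxE /= !(eq_sym m).
case: (eqVneq i m) => [->|im]; case: (eqVneq j m) => [->|jm];
  rewrite ?eqxx ?(eq_sym m) ?(negbTE im) ?(negbTE jm) /= ?mulr1 ?mulr0 ?mul1r ?mul0r ?addr0 ?add0r //.
Qed.

Lemma DE {F : fieldType} (a : 'I_5 -> 'I_5 -> F) f (H : is_derivation a f) i j k :
  a i j * f i k + a j i * f j k =
  (a k j * f i k + (k == j)%:R * \sum_(l < 5) a k l * f i l) +
  (a k i * f j k + (k == i)%:R * \sum_(l < 5) a k l * f j l).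
Proof.
have := congr1 (fun M : 'rV[F]_5 => M 0 k) (H (ebasis F i) (ebasis F j)).
rewrite /= lvee mulmxDl -!scalemxAl !ebf [in X in X = _ -> _]mxE [in X in _ = X -> _]mxE.
rewrite (lvmul_ue a (row i f)) (lvmulC a (ebasis F i) (row j f)) (lvmul_ue a (row j f)).
rewrite !mxE => ->.
by congr (_ + _ * _ + (_ + _ * _)); apply: eq_bigr => l _; rewrite mxE.
Qed.

Ltac getE F H i j k :=
  let E := fresh "E" in
  have E := DE _ _ H (o i) (o j) (o k);
  move: E; rewrite !big_ord_recl !big_ord0 /table9 /=
    ?(mul0r, mulr0, mul1r, mulr1, add0r, addr0) ?o4E ?o3E ?o2E ?o1E ?o0E.

Lemma ord5P (P : 'I_5 -> Prop) :
  P (o 0) -> P (o 1) -> P (o 2) -> P (o 3) -> P (o 4) -> forall k, P k.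
Proof.
move=> P0 P1 P2 P3 P4 [[|[|[|[|[|n]]]]] Hn];
  try by (have -> : Hn = isT by apply: bool_irrelevance).
by [].
Qed.

Lemma linE {F : fieldType} {c x L R : F} : c != 0 -> c * x = L - R -> L = R -> x = 0.
Proof.
move=> c0 e lr; move: e; rewrite lr subrr => /eqP.
by rewrite mulf_eq0 (negbTE c0) /= => /eqP.
Qed.

Lemma nzhalf {F : fieldType} {x : F} : (2%:R : F) != 0 -> x != 2^-1 -> 2 * x - 1 != 0.
Proof.
move=> h2 hx; apply: contra hx; rewrite subr_eq0 => /eqP e.
by apply/eqP; apply: (mulfI h2); rewrite e mulfV.
Qed.

Definition Pf {F : fieldType} (f : 'M[F]_5) :=
  (forall k, f (o 0) k = 0) /\ (forall k, f (o 3) k = 0) /\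
  (forall i, i = o 1 \/ i = o 2 \/ i = o 4 ->
     f i (o 0) = 0 /\ f i (o 3) = 0 /\ f i (o 1) = -(f i (o 2) + f i (o 4))).

Lemma L1 (F : fieldType) (alpha delta : F)
  (hchar : (2%:R : F) != 0)
  (halpha : alpha != (2%:R : F)^-1) (hdelta : delta != (2%:R : F)^-1)
  (had : alpha != delta) (f : 'M[F]_5) :
  is_derivation (table9 alpha delta) f -> Pf f.
Proof.
move=> H.
have nA := nzhalf hchar halpha.
have nD := nzhalf hchar hdelta.
have nAD : alpha - delta != 0 by rewrite subr_eq0.
getE F H 0%N 0%N 1%N => E001.
getE F H 0%N 0%N 2%N => E002.
getE F H 0%N 0%N 3%N => E003.
getE F H 0%N 0%N 4%N => E004.
have d01 : f (o 0) (o 1) = 0 by apply: (linE nA _ E001); field.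
have d02 : f (o 0) (o 2) = 0 by apply: (linE nA _ E002); field.
have d03 : f (o 0) (o 3) = 0 by apply: (linE nD _ E003); field.
have d04 : f (o 0) (o 4) = 0 by apply: (linE nA _ E004); field.
have nA' : 1 - 2 * alpha != 0 by rewrite -opprB oppr_eq0.
have nD' : 1 - 2 * delta != 0 by rewrite -opprB oppr_eq0.
have n1 : (-1 : F) != 0 by rewrite oppr_eq0 oner_eq0.
getE F H 1%N 1%N 0%N => E110.
getE F H 2%N 2%N 0%N => E220.
getE F H 3%N 3%N 0%N => E330.
getE F H 4%N 4%N 0%N => E440.
have d10 : f (o 1) (o 0) = 0 by apply: (linE nA' _ E110); field.
have d20 : f (o 2) (o 0) = 0 by apply: (linE nA' _ E220); field.
have d30 : f (o 3) (o 0) = 0 by apply: (linE nD' _ E330); field.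
have d40 : f (o 4) (o 0) = 0 by apply: (linE nA' _ E440); field.
getE F H 0%N 1%N 1%N => E011.
getE F H 0%N 3%N 3%N => E033.
have d00 : f (o 0) (o 0) = 0.
  case: (eqVneq alpha 1) => [a1|a1].
    have nd1 : delta - 1 != 0 by rewrite subr_eq0 -a1 eq_sym.
    by apply: (linE nd1 _ E033); rewrite ?d01 ?d02 ?d03 ?d04; field.
  have na1 : alpha - 1 != 0 by rewrite subr_eq0.
  by apply: (linE na1 _ E011); rewrite ?d01 ?d02 ?d03 ?d04; field.
getE F H 1%N 1%N 1%N => E111.
getE F H 2%N 2%N 2%N => E222.
getE F H 3%N 3%N 3%N => E333.
getE F H 4%N 4%N 4%N => E444.
have S1 : f (o 1) (o 1) + f (o 1) (o 2) + f (o 1) (o 3) + f (o 1) (o 4) = 0.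
  by apply: (linE n1 _ E111); rewrite ?d10; field.
have S2 : f (o 2) (o 1) + f (o 2) (o 2) + f (o 2) (o 3) + f (o 2) (o 4) = 0.
  by apply: (linE n1 _ E222); rewrite ?d20; field.
have S3 : f (o 3) (o 1) + f (o 3) (o 2) + f (o 3) (o 3) + f (o 3) (o 4) = 0.
  by apply: (linE n1 _ E333); rewrite ?d30; field.
have S4 : f (o 4) (o 1) + f (o 4) (o 2) + f (o 4) (o 3) + f (o 4) (o 4) = 0.
  by apply: (linE n1 _ E444); rewrite ?d40; field.
getE F H 0%N 3%N 1%N => E031.
getE F H 0%N 3%N 2%N => E032.
getE F H 0%N 3%N 4%N => E034.
have d31 : f (o 3) (o 1) = 0.
  by apply: (linE nAD _ E031); rewrite ?d00 ?d01 ?d02 ?d03 ?d04; field.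
have d32 : f (o 3) (o 2) = 0.
  by apply: (linE nAD _ E032); rewrite ?d00 ?d01 ?d02 ?d03 ?d04; field.
have d34 : f (o 3) (o 4) = 0.
  by apply: (linE nAD _ E034); rewrite ?d00 ?d01 ?d02 ?d03 ?d04; field.
have d33 : f (o 3) (o 3) = 0.
  by move: S3; rewrite d31 d32 d34 !add0r addr0.
getE F H 0%N 1%N 0%N => E010.
getE F H 0%N 2%N 0%N => E020.
getE F H 0%N 4%N 0%N => E040.
have S1' : f (o 1) (o 1) = - (f (o 1) (o 2) + f (o 1) (o 3) + f (o 1) (o 4)).
  by apply/eqP; rewrite -addr_eq0 !addrA S1.
have S2' : f (o 2) (o 1) = - (f (o 2) (o 2) + f (o 2) (o 3) + f (o 2) (o 4)).
  by apply/eqP; rewrite -addr_eq0 !addrA S2.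
have S4' : f (o 4) (o 1) = - (f (o 4) (o 2) + f (o 4) (o 3) + f (o 4) (o 4)).
  by apply/eqP; rewrite -addr_eq0 !addrA S4.
have d13 : f (o 1) (o 3) = 0.
  by apply: (linE nAD _ E010); rewrite ?d00 ?d10 ?S1'; field.
have d23 : f (o 2) (o 3) = 0.
  by apply: (linE nAD _ E020); rewrite ?d00 ?d20 ?S2'; field.
have d43 : f (o 4) (o 3) = 0.
  by apply: (linE nAD _ E040); rewrite ?d00 ?d40 ?S4'; field.
split; [|split].
- by elim/ord5P.
- by elim/ord5P.
move=> i [->|[->|->]]; split => //; split => //.
- by rewrite S1' d13 addr0.
- by rewrite S2' d23 addr0.
- by rewrite S4' d43 addr0.
Qed.

Lemma L2 (F : fieldType) (alpha delta : F) (hchar : (2%:R : F) != 0) (f : 'M[F]_5) :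
  Pf f -> is_derivation (table9 alpha delta) f.
Proof.
move=> [R0 [R3 Ri]] u v.
have [d10 [d13 t1]] := Ri (o 1) (or_introl erefl).
have [d20 [d23 t2]] := Ri (o 2) (or_intror (or_introl erefl)).
have [d40 [d43 t4]] := Ri (o 4) (or_intror (or_intror erefl)).
apply/rowP; elim/ord5P; rewrite !mxE; under eq_bigr do rewrite lvmulE; rewrite !lvmulE;
  rewrite !big_ord_recl !big_ord0 /table9 /= !mxE !big_ord_recl !big_ord0 /=
    ?o4E ?o3E ?o2E ?o1E ?o0E ?R0 ?R3 ?d10 ?d13 ?t1 ?d20 ?d23 ?t2 ?d40 ?d43 ?t4.
all: field.
all: exact: hchar.
Qed.

Lemma L3 (F : fieldType) (f : 'M[F]_5) :
  Pf f <-> [/\ ebasis F 0 *m f = 0, ebasis F 3 *m f = 0 & (f <= span9 F)%MS].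
Proof.
have z0 : (0 : 'I_5) = o 0 by apply: val_inj.
have z3 : (3 : 'I_5) = o 3 by apply: val_inj.
split.
  move=> [R0 [R3 Ri]].
  have [d10 [d13 t1]] := Ri (o 1) (or_introl erefl).
  have [d20 [d23 t2]] := Ri (o 2) (or_intror (or_introl erefl)).
  have [d40 [d43 t4]] := Ri (o 4) (or_intror (or_intror erefl)).
  split.
  - by apply/rowP => k; rewrite ebf !mxE z0 R0.
  - by apply/rowP => k; rewrite ebf !mxE z3 R3.
  apply/submxP; exists (\matrix_(i, l) if l == ord0 then - f i (o 2) else - f i (o 4)).
  apply/matrixP => i j; rewrite spanE !mxE /=.
  elim/ord5P: i; elim/ord5P: j => /=;
    rewrite ?R0 ?R3 ?d10 ?d13 ?t1 ?d20 ?d23 ?t2 ?d40 ?d43 ?t4; ring.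
move=> [h0 h3 /submxP [D hD]].
split; [|split].
- move=> k; have := congr1 (fun M : 'rV[F]_5 => M 0 k) h0.
  by rewrite /= ebf !mxE z0.
- move=> k; have := congr1 (fun M : 'rV[F]_5 => M 0 k) h3.
  by rewrite /= ebf !mxE z3.
move=> i _; rewrite hD !spanE /=.
split; [ring | split; ring].
Qed.

Theorem mainTheorem9 (F : fieldType) (alpha delta : F)
  (hchar : (2%:R : F) != 0)
  (halpha : alpha != (2%:R : F)^-1) (hdelta : delta != (2%:R : F)^-1)
  (had : alpha != delta) (f : 'M[F]_5) :
  is_derivation (table9 alpha delta) f <->
  [/\ ebasis F 0 *m f = 0, ebasis F 3 *m f = 0 & (f <= span9 F)%MS].
Proof.
split => H.
  by apply/L3; exact: (@L1 F alpha delta hchar halpha hdelta had f H).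
by apply: (@L2 F alpha delta hchar f); apply/L3.
Qed.
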